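(* Consider the Que Sera Consensus (QSC) protocol, as described in the context, running on $n$ nodes atop a full-spread threshold synchronous broadcast primitive $\mathrm{TSB}(t_r,t_b,n)$ with $t_r>0$ and $t_b>0$. If a consensus round starting at time-step $s$ has initial history $h_{s_i}$ on node $i$, then for every earlier consensus round, starting at a time-step $s'<s$, there exists some node $j$ whose initial history $h_{s'_j}$ in that earlier round is a strict prefix of $h_{s_i}$.
   Context: Threshold synchronous broadcast (TSB). A group of $n$ nodes, numbered $1,\dots,n$, operates in integer logical time-steps $0,1,2,\dots$. Nodes may fail only by crashing permanently. In each time-step every non-failed node calls $\mathrm{Broadcast}(m)$ exactly once; the call returns a pair $(R,B)$ of message sets. A primitive provides $\mathrm{TSB}(t_r,t_b,t_s)$ if: (lock-step synchrony) a call to $\mathrm{Broadcast}(m)$ at step $s$ returns at step $s+1$ unless the node fails before reaching step $s+1$; (receive threshold) if node $i$'s call at step $s$ returns $(R,B)$, there is $N_R\subseteq\{1,\dots,n\}$ with $|N_R|\ge t_r$ such that $R$ is exactly the set of messages broadcast by the nodes in $N_R$ during step $s$; (broadcast threshold) there is $N_B\subseteq\{1,\dots,n\}$ with $|N_B|\ge t_b$ such that $B$ is exactly the set of messages broadcast by the nodes in $N_B$ during step $s$; (spread threshold) if some node's call at step $s$ returns $(R,B)$ with $m'\in B$, then there are at least $t_s$ nodes whose receive sets $R$ returned from their step-$s$ calls include $m'$ (a node that fails before completing step $s$ counts if it would have received $m'$ had it not failed). The case $t_s=n$ is called full-spread. Histories and priorities. A proposal is a triple $\langle i,m,r\rangle$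 (node, message, numeric priority). A history is a finite list of proposals; $[]$ is the empty history and $\|$ is list concatenation. The priority of a nonempty history is the priority $r$ of its last proposal. A history $h$ is best in a set $H$ if $h\in H$ and no $h'\in H$ has strictly greater priority; $h$ is uniquely best in $H$ if $h\in H$ and no other $h'\ne h$ in $H$ has priority greater than or equal to that of $h$. QSC protocol. It is parameterized by functions ChooseMessage (returns some message, possibly empty), Deliver (passes a history to the application), RandomValue (returns a value drawn using node-private randomness from a fixed nontrivial distribution, the same on every node, with at least two values of nonzero probability), and Broadcast (the TSB primitive). Each node $i$ runs: set $h\leftarrow[]$; then forever repeat a consensus round: $m\leftarrow\mathrm{ChooseMessage}()$; $r\leftarrow\mathrm{RandomValue}()$; $h'\leftarrow h\,\|\,[\langle i,m,r\rangle]$; $(R',B')\leftarrow\mathrm{Broadcast}(h')$; $h''\leftarrow$ any best history in $B'$; $(R'',B'')\leftarrow\mathrm{Broadcast}(h'')$; $h\leftarrow$ any best history in $R''$; if $h\in B''$ and $h$ is uniquely best in $R'$, call $\mathrm{Deliver}(h)$. Each round thus occupies two time-steps; the value of $h$ at the start of a round is the node's initial history for that round, and the value of $h$ assigned from $R''$ is its resulting history for that round. *)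

(* Defs.v *)
From mathcomp Require Import all_boot all_order.
Set Implicit Arguments. Unset Strict Implicit. Unset Printing Implicit Defensive.
Import Order.TTheory.
Local Open Scope order_scope.

Section QSC.
(* n nodes, indexed by 'I_n (node k+1 of the paper is ordinal k);
   M = application messages; Pr = numeric priorities (any totally ordered type). *)
Variables (n : nat) (M : eqType) (d : Order.disp_t) (Pr : orderType d).

Definition proposal : eqType := ('I_n * M * Pr)%type.
Definition history : eqType := seq proposal.

Definition prio (h : history) : option Pr :=
  match h with [::] => None | p :: h' => Some (last p h').2 end.

Definition prio_gt (h1 h2 : history) : bool :=
  match prio h1, prio h2 with Some a, Some b => b < a | _, _ => false end.
Definition prio_ge (h1 h2 : history) : bool :=
  match prio h1, prio h2 with Some a, Some b => b <= a | _, _ => false end.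

(* h is best in H (H a set of histories, given as a sequence used as a set). *)
Definition best (H : seq history) (h : history) : Prop :=
  h \in H /\ forall h', h' \in H -> ~~ prio_gt h' h.
Definition uniquely_best (H : seq history) (h : history) : Prop :=
  h \in H /\ forall h', h' \in H -> h' != h -> ~~ prio_ge h' h.

(* An execution of the protocol: time-steps are natural numbers.
   - alive s i    : node i has not failed before reaching step s, i.e. it calls
                    Broadcast at step s (and, for s > 0, its call of step s-1 returned);
   - bcast s i    : the message (a history) node i broadcasts at step s;
   - recvR s i, recvB s i : the sets R and B returned at step s+1 by node i's call
                    of step s (meaningful when alive s.+1 i); for a node that
                    failed, recvR s i is the receive set it would have had
                    (used only by the spread threshold);
   - hinit k i    : node i's initial history for consensus round k
                    (round k occupies steps 2k and 2k+1);
   - cmsg k i, rnd k i : values returned by ChooseMessage / RandomValue in round k;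
   - hmid k i     : the history h'' chosen in round k. *)
Record execution := Execution {
  alive : nat -> 'I_n -> bool;
  bcast : nat -> 'I_n -> history;
  recvR : nat -> 'I_n -> seq history;
  recvB : nat -> 'I_n -> seq history;
  hinit : nat -> 'I_n -> history;
  cmsg  : nat -> 'I_n -> M;
  rnd   : nat -> 'I_n -> Pr;
  hmid  : nat -> 'I_n -> history
}.

Definition exactly_from (E : execution) (s : nat) (N : {set 'I_n})
    (X : seq history) : Prop :=
  (forall j, j \in N -> alive E s j) /\
  (forall h, h \in X <-> exists2 j, j \in N & h = bcast E s j).

(* Crash failures are permanent, and the primitive provides TSB(t_r, t_b, t_s). *)
Definition TSB (t_r t_b t_s : nat) (E : execution) : Prop :=
  (forall s i, alive E s.+1 i -> alive E s i) /\
  (forall s i, alive E s.+1 i ->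
     exists2 NR : {set 'I_n}, (t_r <= #|NR|)%N & exactly_from E s NR (recvR E s i)) /\
  (forall s i, alive E s.+1 i ->
     exists2 NB : {set 'I_n}, (t_b <= #|NB|)%N & exactly_from E s NB (recvB E s i)) /\
  (* spread threshold (failed nodes counted through their would-be receive sets) *)
  (forall s i h, alive E s.+1 i -> h \in recvB E s i ->
     (t_s <= #|[set j | h \in recvR E s j]|)%N).

Definition runs_QSC (E : execution) : Prop :=
  (forall i, hinit E 0 i = [::]) /\
  forall i k,
  (alive E k.*2 i ->
     bcast E k.*2 i = rcons (hinit E k i) (i, cmsg E k i, rnd E k i)) /\
  (alive E k.*2.+1 i ->
     best (recvB E k.*2 i) (hmid E k i) /\ bcast E k.*2.+1 i = hmid E k i) /\
  (alive E k.*2.+2 i -> best (recvR E k.*2.+1 i) (hinit E k.+1 i)).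

Definition strict_prefix (a b : history) : bool :=
  prefix a b && (size a < size b)%N.

End QSC.

(* Main.v *)
Require Import Defs.
From mathcomp Require Import all_boot all_order.

Lemma step_lemma (n : nat) (M : eqType) (d : Order.disp_t) (Pr : orderType d)
    (t_r t_b : nat) (E : execution n M Pr) :
  TSB t_r t_b n E -> runs_QSC E ->
  forall k (i : 'I_n), alive E k.+1.*2 i ->
  exists j : 'I_n, alive E k.*2 j /\
    exists p, hinit E k.+1 i = rcons (hinit E k j) p.
Proof.
move=> [_ [HR [HB _]]] [_ HQ] k i Ha.
have Ha' : alive E k.*2.+2 i by rewrite doubleS in Ha.
have [_ [_ H3]] := HQ i k.
have [Hin _] := H3 Ha'.
have [NR _ [HNR1 HNR2]] := HR _ _ Ha'.
have [j1 Hj1 ->] := (proj1 (HNR2 _)) Hin.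
have A1 : alive E k.*2.+1 j1 by apply: HNR1.
have [_ [H2 _]] := HQ j1 k.
have [[Hin2 _] ->] := H2 A1.
have [NB _ [HNB1 HNB2]] := HB _ _ A1.
have [j2 Hj2 ->] := (proj1 (HNB2 _)) Hin2.
have A2 : alive E k.*2 j2 by apply: HNB1.
exists j2; split => //.
have [H1 _] := HQ j2 k.
by rewrite (H1 A2); eexists.
Qed.

Theorem lemma2 (n : nat) (M : eqType) (d : Order.disp_t) (Pr : orderType d)
    (t_r t_b : nat) (E : execution n M Pr) :
  0 < t_r -> 0 < t_b ->
  TSB t_r t_b n E -> runs_QSC E ->
  forall (k : nat) (i : 'I_n), alive E k.*2 i ->
  forall k' : nat, k' < k ->
  exists j : 'I_n, alive E k'.*2 j /\ strict_prefix (hinit E k' j) (hinit E k i).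
Proof.
move=> _ _ HT HQ k; elim: k => [//|k IH] i Ha k' Hk'.
have [j2 [A2 [p Hp]]] := @step_lemma n M d Pr t_r t_b E HT HQ k i Ha.
have SP : strict_prefix (hinit E k j2) (hinit E k.+1 i).
  by rewrite /strict_prefix Hp prefix_rcons size_rcons ltnSn.
rewrite ltnS leq_eqVlt in Hk'.
case/orP: Hk' => [/eqP ->|Hlt]; first by exists j2.
have [j [Aj /andP [P1 S1]]] := IH j2 A2 k' Hlt.
exists j; split => //.
move/andP: SP => [P2 S2].
rewrite /strict_prefix (prefix_trans P1 P2) /=.
exact: ltn_trans S1 S2.
Qed.
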